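(* Assume (F1)–(F3) and let $f_0\in C^1([0,1])$ be non-increasing with $f_0(w)\le f(w)$ for $0\le w\le1$, $f_0(0)>1$, $f_0(1)=0$, and such that $1-w=f_0(w)$ has exactly one solution in $(0,1)$. Let $c^{(0)}$ be the unique value of $c$ for which the non-delayed problem $w''+cw'+w(1-w-f_0(w))=0$, $w(-\infty)=1$, $w(+\infty)=0$ has a solution. If, for some $\tau\ge0$ and some $c>0$, problem (P) has a monotonically decreasing solution, then $c\le c^{(0)}$.
   Context: $f:\mathbb R\to\mathbb R$ is $C^4$ with bounded derivatives and satisfies: (F1) $f(w)>0$ for $0\le w<1$, $f(1)=0$, $f'(1)>-1$; (F2) $f(0)>1$, $f'(0)>0$, and $f(w)>1$ for $0\le w<w_*$ for some $w_*\in(0,1)$; (F3) the equation $f(w)=1-w$ has exactly one solution $w_0$ in $(0,1)$, and $f'(w_0)<-1$. Problem (P) for given $\tau\ge0$, $c\in\mathbb R$: find $w\in C^2(\mathbb R)$ with $w''(x)+cw'(x)+w(x)\big(1-w(x)-f(w(x+c\tau))\big)=0$ for all $x$, and $w(-\infty)=1$, $w(+\infty)=0$. *)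

(* Defs.v *)
From Stdlib Require Import Reals Lra.
Open Scope R_scope.

Definition bounded_fun (g : R -> R) : Prop :=
  exists M : R, forall x : R, Rabs (g x) <= M.

Definition C2_with (w w1 w2 : R -> R) : Prop :=
  (forall x, derivable_pt_lim w x (w1 x)) /\
  (forall x, derivable_pt_lim w1 x (w2 x)) /\
  continuity w2.

Definition lim_minus_inf (w : R -> R) (l : R) : Prop :=
  forall eps, eps > 0 -> exists M, forall x, x <= M -> Rabs (w x - l) < eps.
Definition lim_plus_inf (w : R -> R) (l : R) : Prop :=
  forall eps, eps > 0 -> exists M, forall x, x >= M -> Rabs (w x - l) < eps.

Definition C1_on_01 (g : R -> R) : Prop :=
  exists g' : R -> R,
    (forall x, 0 <= x <= 1 ->
       limit1_in (fun y => (g y - g x) / (y - x))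
                 (fun y => 0 <= y <= 1 /\ y <> x) (g' x) x) /\
    (forall x, 0 <= x <= 1 ->
       limit1_in g' (fun y => 0 <= y <= 1) (g' x) x).

Definition solves_P (f : R -> R) (tau c : R) (w : R -> R) : Prop :=
  exists w1 w2 : R -> R,
    C2_with w w1 w2 /\
    (forall x, w2 x + c * w1 x + w x * (1 - w x - f (w (x + c * tau))) = 0) /\
    lim_minus_inf w 1 /\ lim_plus_inf w 0.

Definition solves_nondelayed (f0 : R -> R) (c : R) (w : R -> R) : Prop :=
  exists w1 w2 : R -> R,
    C2_with w w1 w2 /\
    (forall x, 0 <= w x <= 1) /\
    (forall x, w2 x + c * w1 x + w x * (1 - w x - f0 (w x)) = 0) /\
    lim_minus_inf w 1 /\ lim_plus_inf w 0.

(* Main.v *)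
Require Import Defs.
From Stdlib Require Import Reals Lra Classical ClassicalEpsilon Ranalysis5.
Open Scope R_scope.

Lemma deriv_le0_decr (F F' : R -> R) a b :
  a <= b -> (forall x, a <= x <= b -> derivable_pt_lim F x (F' x)) ->
  (forall x, a <= x <= b -> F' x <= 0) -> F b <= F a.
Proof.
  intros Hab HD HS. destruct (Req_dec a b) as [->|Hne]; [lra|].
  destruct (MVT_cor2 F F' a b) as [c [Hc Hc2]]; [lra|exact HD|].
  assert (F' c <= 0) by (apply HS; lra). nra.
Qed.

Lemma deriv_ge0_incr (F F' : R -> R) a b :
  a <= b -> (forall x, a <= x <= b -> derivable_pt_lim F x (F' x)) ->
  (forall x, a <= x <= b -> 0 <= F' x) -> F a <= F b.
Proof.
  intros Hab HD HS. destruct (Req_dec a b) as [->|Hne]; [lra|].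
  destruct (MVT_cor2 F F' a b) as [c [Hc Hc2]]; [lra|exact HD|].
  assert (0 <= F' c) by (apply HS; lra). nra.
Qed.

Lemma deriv_lt0_sdecr (F F' : R -> R) a b :
  a < b -> (forall x, a <= x <= b -> derivable_pt_lim F x (F' x)) ->
  (forall x, a <= x <= b -> F' x < 0) -> F b < F a.
Proof.
  intros Hab HD HS.
  destruct (MVT_cor2 F F' a b) as [c [Hc Hc2]]; [lra|exact HD|].
  assert (F' c < 0) by (apply HS; lra). nra.
Qed.

Lemma deriv_bound (F F' : R -> R) a b K :
  a <= b -> (forall x, a <= x <= b -> derivable_pt_lim F x (F' x)) ->
  (forall x, a <= x <= b -> Rabs (F' x) <= K) -> Rabs (F b - F a) <= K * (b - a).
Proof.
  intros Hab HD HS. destruct (Req_dec a b) as [->|Hne].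
  { replace (F b - F b) with 0 by ring. rewrite Rabs_R0. 
    assert (0 <= K). { specialize (HS b). assert (Rabs (F' b) <= K) by (apply HS; lra).
    pose proof (Rabs_pos (F' b)). lra. } nra. }
  destruct (MVT_cor2 F F' a b) as [c [Hc Hc2]]; [lra|exact HD|].
  rewrite Hc, Rabs_mult. rewrite (Rabs_right (b - a)) by lra.
  apply Rmult_le_compat_r; [lra|]. apply HS; lra.
Qed.

Lemma deriv_sign_all (F : R -> R) x l :
  derivable_pt_lim F x l -> l <> 0 -> exists eta, 0 < eta /\ forall h, 0 < h < eta ->
  0 < (F (x + h) - F x) * l /\ (F (x + - h) - F x) * l < 0.
Proof.
  intros Hd Hl.
  destruct (Hd (Rabs l / 2)) as [d Hdd].
  { pose proof (Rabs_pos_lt l Hl). lra. }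
  assert (Hd0 : 0 < d) by (destruct d; simpl; lra).
  exists d. split; auto. intros h Hh.
  assert (G1 := Hdd h). assert (G2 := Hdd (-h)).
  assert (Rabs h < d) by (rewrite Rabs_right; lra).
  assert (Rabs (-h) < d) by (rewrite Rabs_Ropp, Rabs_right; lra).
  specialize (G1 ltac:(lra) ltac:(assumption)).
  specialize (G2 ltac:(lra) ltac:(assumption)).
  set (q1 := (F (x + h) - F x) / h) in *.
  set (q2 := (F (x + - h) - F x) / - h) in *.
  assert (E1 : F (x + h) - F x = q1 * h) by (unfold q1; field; lra).
  assert (E2 : F (x + - h) - F x = - (q2 * h)) by (unfold q2; field; lra).
  rewrite E1, E2.
  apply Rabs_def2 in G1. apply Rabs_def2 in G2.
  destruct (Rlt_or_le 0 l) as [Hp|Hn].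
  - rewrite Rabs_right in G1, G2 by lra.
    assert (0 < q1) by lra. assert (0 < q2) by lra.
    split.
    + apply Rmult_lt_0_compat; [apply Rmult_lt_0_compat|]; lra.
    + assert (0 < q2 * h * l) by (apply Rmult_lt_0_compat; [apply Rmult_lt_0_compat|]; lra). lra.
  - assert (l < 0) by lra. rewrite Rabs_left in G1, G2 by lra.
    assert (q1 < 0) by lra. assert (q2 < 0) by lra.
    split.
    + assert (0 < (-q1) * h * (-l)) by (apply Rmult_lt_0_compat; [apply Rmult_lt_0_compat|]; lra). lra.
    + assert (0 < (-q2) * h * (-l)) by (apply Rmult_lt_0_compat; [apply Rmult_lt_0_compat|]; lra). lra.
Qed.

Lemma deriv_sign_h (F : R -> R) x l :
  derivable_pt_lim F x l -> l <> 0 -> forall eta, 0 < eta ->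
  exists h, 0 < h < eta /\ 0 < (F (x + h) - F x) * l /\ (F (x + - h) - F x) * l < 0.
Proof.
  intros Hd Hl eta Heta. destruct (deriv_sign_all F x l Hd Hl) as [d [Hd0 Hh]].
  exists (Rmin d eta / 2).
  assert (0 < Rmin d eta) by (apply Rmin_glb_lt; lra).
  assert (Rmin d eta <= d) by apply Rmin_l. assert (Rmin d eta <= eta) by apply Rmin_r.
  split; [lra|]. apply Hh. lra.
Qed.

Lemma deriv_zero_at_min (F : R -> R) x l eta :
  0 < eta -> (forall y, Rabs (y - x) < eta -> F x <= F y) ->
  derivable_pt_lim F x l -> l = 0.
Proof.
  intros He Hm Hd. destruct (Req_dec l 0) as [|Hl]; auto. exfalso.
  destruct (deriv_sign_h F x l Hd Hl eta He) as [h [Hh [A B]]].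
  assert (F x <= F (x + h)) by (apply Hm; replace (x + h - x) with h by ring; rewrite Rabs_right; lra).
  assert (F x <= F (x + - h)) by (apply Hm; replace (x + - h - x) with (-h) by ring;
    rewrite Rabs_Ropp, Rabs_right; lra).
  destruct (Rlt_or_le 0 l); nra.
Qed.

Lemma deriv_le0_of_decr (F : R -> R) x l :
  (forall a b, a <= b -> F b <= F a) -> derivable_pt_lim F x l -> l <= 0.
Proof.
  intros Hm Hd. destruct (Rle_dec l 0) as [|Hl]; auto. exfalso.
  destruct (deriv_sign_h F x l Hd ltac:(lra) 1 ltac:(lra)) as [h [Hh [A B]]].
  assert (F (x + h) <= F x) by (apply Hm; lra). nra.
Qed.

Lemma cont_of_deriv (F : R -> R) x l : derivable_pt_lim F x l -> continuity_pt F x.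
Proof. intro H. apply (derivable_continuous_pt F x (exist _ l H)). Qed.

Lemma cont_eps (f : R -> R) x : continuity_pt f x ->
  forall eps, 0 < eps -> exists del, 0 < del /\ forall y, Rabs (y - x) < del -> Rabs (f y - f x) < eps.
Proof.
  intros H eps He. unfold continuity_pt, continue_in, limit1_in, limit_in in H.
  destruct (H eps He) as [del [Hd Hy]]. exists del. split; auto.
  intros y Hyx. destruct (Req_dec y x) as [->|Hne].
  - replace (f x - f x) with 0 by ring. rewrite Rabs_R0; lra.
  - apply (Hy y). split. { unfold D_x, no_cond. split; auto. } exact Hyx.
Qed.

Lemma no_up_cross (p p' : R -> R) a t :
  a < t -> (forall x, a <= x <= t -> derivable_pt_lim p x (p' x)) ->
  (forall x, a <= x <= t -> p x = 0 -> p' x < 0) -> p a <= 0 -> p t < 0.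
Proof.
  intros Hat HD HZ Ha.
  assert (Hc : forall x, a <= x <= t -> continuity_pt p x)
    by (intros x Hx; exact (cont_of_deriv _ _ _ (HD x Hx))).
  assert (Step1 : exists a', a <= a' < t /\ p a' < 0).
  { destruct (Rlt_or_le (p a) 0) as [Hl|Hl]. { exists a; split; lra. }
    assert (Hp0 : p a = 0) by lra.
    assert (Hd' : p' a < 0) by (apply HZ; [lra|auto]).
    destruct (deriv_sign_h p a (p' a) (HD a ltac:(lra)) ltac:(lra) (t - a) ltac:(lra))
      as [h [Hh [A1 A2]]].
    exists (a + h). split; [lra|]. rewrite Hp0 in A1. nra. }
  destruct Step1 as [a' [Ha' Hpa']].
  destruct (Rlt_or_le (p t) 0) as [|Hpt]; auto. exfalso.
  set (E := fun s => a' <= s <= t /\ forall y, a' <= y <= s -> p y < 0).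
  assert (Hb : bound E) by (exists t; intros s [Hs _]; lra).
  assert (Hex : exists s, E s).
  { exists a'. split; [lra|]. intros y Hy. replace y with a' by lra. auto. }
  destruct (completeness E Hb Hex) as [r [Hub Hlub]].
  assert (Ha'r : a' <= r) by (apply Hub; destruct Hex as [s Hs]; split; [lra|];
     intros y Hy; replace y with a' by lra; auto).
  assert (Hrt : r <= t) by (apply Hlub; intros s [Hs _]; lra).
  assert (Hleft : forall y, a' <= y < r -> p y < 0).
  { intros y Hy. destruct (Rlt_or_le y r) as [_|]; [|lra].
    assert (~ is_upper_bound E y).
    { intro Hu. specialize (Hlub y Hu). lra. }
    apply not_all_ex_not in H. destruct H as [s Hs].
    apply Classical_Prop.imply_to_and in Hs. destruct Hs as [[Hs1 Hs2] Hs3].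
    apply Hs2. lra. }
  assert (Hr0 : p r = 0).
  { destruct (Rtotal_order (p r) 0) as [Hn|[Hz|Hpos]]; auto.
    - exfalso. destruct (Req_dec r t) as [->|Hne]; [lra|].
      destruct (cont_eps p r (Hc r ltac:(lra)) (- p r) ltac:(lra)) as [del [Hdel Hdd]].
      set (s := Rmin t (r + del/2)).
      assert (s <= t) by apply Rmin_l. assert (s <= r + del/2) by apply Rmin_r.
      assert (r < s) by (unfold s; apply Rmin_glb_lt; lra).
      assert (E s).
      { split; [lra|]. intros y Hy. destruct (Rlt_or_le y r). { apply Hleft; lra. }
        assert (Rabs (y - r) < del) by (rewrite Rabs_right; lra).
        specialize (Hdd y H3). apply Rabs_def2 in Hdd. lra. }
      specialize (Hub s H2). lra.
    - exfalso. assert (Hne : a' < r).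
      { destruct (Req_dec a' r) as [<-|]; [lra|lra]. }
      destruct (cont_eps p r (Hc r ltac:(lra)) (p r) ltac:(lra)) as [del [Hdel Hdd]].
      set (y := Rmax a' (r - del/2)).
      assert (a' <= y) by apply Rmax_l. assert (r - del/2 <= y) by apply Rmax_r.
      assert (y < r) by (unfold y; apply Rmax_lub_lt; lra).
      assert (Rabs (y - r) < del) by (rewrite Rabs_left; lra).
      specialize (Hdd y H2). apply Rabs_def2 in Hdd.
      assert (p y < 0) by (apply Hleft; lra). lra. }
  assert (Hne : a' < r).
  { destruct (Req_dec a' r) as [<-|]; [lra|lra]. }
  assert (Hd' : p' r < 0) by (apply HZ; [lra|auto]).
  destruct (deriv_sign_h p r (p' r) (HD r ltac:(lra)) ltac:(lra) (r - a') ltac:(lra))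
    as [h [Hh [A1 A2]]].
  rewrite Hr0 in A2.
  assert (p (r + - h) < 0) by (apply Hleft; lra). nra.
Qed.

Lemma Rabs_le_d (x a : R) : Rabs x <= a -> - a <= x /\ x <= a.
Proof. unfold Rabs; destruct (Rcase_abs x); intros; split; lra. Qed.

Lemma mvt_lo (F F' : R -> R) a b m :
  a < b -> (forall x, a <= x <= b -> derivable_pt_lim F x (F' x)) ->
  (forall x, a <= x <= b -> m <= F' x) -> m * (b - a) <= F b - F a.
Proof.
  intros Hab HD HS.
  destruct (MVT_cor2 F F' a b) as [c [Hc Hc2]]; [lra|exact HD|].
  assert (m <= F' c) by (apply HS; lra). rewrite Hc. nra.
Qed.

Lemma mvt_hi (F F' : R -> R) a b m :
  a < b -> (forall x, a <= x <= b -> derivable_pt_lim F x (F' x)) ->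
  (forall x, a <= x <= b -> F' x <= m) -> F b - F a <= m * (b - a).
Proof.
  intros Hab HD HS.
  destruct (MVT_cor2 F F' a b) as [c [Hc Hc2]]; [lra|exact HD|].
  assert (F' c <= m) by (apply HS; lra). rewrite Hc. nra.
Qed.

Lemma bound_deriv (g g1 g2 N : R -> R) c B :
  (forall x, derivable_pt_lim g x (g1 x)) -> (forall x, derivable_pt_lim g1 x (g2 x)) ->
  (forall x, 0 <= g x <= 1) -> (forall x, g2 x = - c * g1 x - N x) ->
  (forall x, Rabs (N x) <= B) ->
  forall x, Rabs (g1 x) <= 1 + 2 * Rabs c + B.
Proof.
  intros H1 H2 Hg He HN x.
  destruct (MVT_cor2 g g1 x (x + 1)) as [xi [Hxi Hr]]; [lra|intros; apply H1|].
  assert (Hg1xi : Rabs (g1 xi) <= 1).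
  { replace (g1 xi) with (g (x + 1) - g x) by (rewrite Hxi; field).
    pose proof (Hg (x+1)); pose proof (Hg x). apply Rabs_le; lra. }
  assert (HF : Rabs ((g1 xi + c * g xi) - (g1 x + c * g x)) <= B * (xi - x)).
  { apply (deriv_bound (fun y => g1 y + c * g y) (fun y => - N y)).
    - lra.
    - intros y _. replace (- N y) with (g2 y + c * g1 y) by (rewrite He; ring).
      apply derivable_pt_lim_plus; [apply H2|].
      apply derivable_pt_lim_scal with (f := g); apply H1.
    - intros y _. rewrite Rabs_Ropp. apply HN. }
  assert (0 <= B) by (pose proof (HN x); pose proof (Rabs_pos (N x)); lra).
  assert (Rabs (c * g xi - c * g x) <= Rabs c).
  { replace (c * g xi - c * g x) with (c * (g xi - g x)) by ring.
    rewrite Rabs_mult. pose proof (Hg xi); pose proof (Hg x).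
    assert (Rabs (g xi - g x) <= 1) by (apply Rabs_le; lra).
    pose proof (Rabs_pos c). nra. }
  assert (Rabs (B * (xi - x)) <= B) by (rewrite Rabs_mult, (Rabs_right B), Rabs_right; nra).
  replace (g1 x) with (g1 xi - ((g1 xi + c * g xi) - (g1 x + c * g x)) + (c * g xi - c * g x)) by ring.
  pose proof (Rabs_triang (g1 xi - ((g1 xi + c * g xi) - (g1 x + c * g x))) (c * g xi - c * g x)).
  pose proof (Rabs_triang (g1 xi) (- ((g1 xi + c * g xi) - (g1 x + c * g x)))).
  rewrite Rabs_Ropp in H5. pose proof (Rabs_pos c).
  assert (B * (xi - x) <= B) by nra. unfold Rminus in *. lra.
Qed.

Lemma level_lemma (g g1 g2 : R -> R) K :
  (forall x, derivable_pt_lim g x (g1 x)) -> (forall x, derivable_pt_lim g1 x (g2 x)) ->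
  (forall x, 0 <= g x <= 1) -> 0 < K -> (forall x, Rabs (g2 x) <= K) ->
  forall eps, 0 < eps -> exists del, 0 < del /\
    forall y, (g y < del \/ 1 - del < g y) -> Rabs (g1 y) < eps.
Proof.
  intros H1 H2 Hg HK HB eps He.
  set (t := eps / (2 * K)).
  assert (Ht : 0 < t) by (unfold t; apply Rdiv_lt_0_compat; lra).
  assert (HtK : K * t = eps / 2) by (unfold t; field; lra).
  exists (eps * t / 2). split; [nra|].
  intros y Hy. destruct (Rlt_or_le (Rabs (g1 y)) eps) as [|Hge]; auto. exfalso.
  assert (Hclose : forall xi, y - t <= xi <= y + t -> Rabs (g1 xi - g1 y) <= eps / 2).
  { intros xi Hxi. destruct (Rle_dec y xi).
    - pose proof (deriv_bound g1 g2 y xi K r (fun z _ => H2 z) (fun z _ => HB z)).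
      assert (K * (xi - y) <= K * t) by nra. lra.
    - pose proof (deriv_bound g1 g2 xi y K ltac:(lra) (fun z _ => H2 z) (fun z _ => HB z)).
      rewrite <- Rabs_Ropp. replace (- (g1 xi - g1 y)) with (g1 y - g1 xi) by ring.
      assert (K * (y - xi) <= K * t) by nra. lra. }
  destruct (Rle_or_lt 0 (g1 y)) as [Hp|Hn].
  - rewrite Rabs_right in Hge by lra.
    assert (A1 : eps / 2 * (y + t - y) <= g (y + t) - g y).
    { apply mvt_lo with (F' := g1); [lra|intros; apply H1|].
      intros xi Hxi. specialize (Hclose xi ltac:(lra)). apply Rabs_le_d in Hclose. lra. }
    assert (A2 : eps / 2 * (y - (y - t)) <= g y - g (y - t)).
    { apply mvt_lo with (F' := g1); [lra|intros; apply H1|].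
      intros xi Hxi. specialize (Hclose xi ltac:(lra)). apply Rabs_le_d in Hclose. lra. }
    pose proof (Hg (y + t)); pose proof (Hg (y - t)). destruct Hy; nra.
  - rewrite Rabs_left in Hge by lra.
    assert (A1 : g (y + t) - g y <= - (eps / 2) * (y + t - y)).
    { apply mvt_hi with (F' := g1); [lra|intros; apply H1|].
      intros xi Hxi. specialize (Hclose xi ltac:(lra)). apply Rabs_le_d in Hclose. lra. }
    assert (A2 : g y - g (y - t) <= - (eps / 2) * (y - (y - t))).
    { apply mvt_hi with (F' := g1); [lra|intros; apply H1|].
      intros xi Hxi. specialize (Hclose xi ltac:(lra)). apply Rabs_le_d in Hclose. lra. }
    pose proof (Hg (y + t)); pose proof (Hg (y - t)). destruct Hy; nra.
Qed.

Lemma eps_cont (f : R -> R) x :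
  (forall eps, 0 < eps -> exists del, 0 < del /\ forall y, Rabs (y - x) < del -> Rabs (f y - f x) < eps) ->
  continuity_pt f x.
Proof.
  intros H. unfold continuity_pt, continue_in, limit1_in, limit_in.
  intros eps He. destruct (H eps He) as [del [Hd Hy]]. exists del. split; auto.
  intros y [_ Hyx]. apply Hy. exact Hyx.
Qed.

Definition clamp (s : R) : R := Rmax 0 (Rmin s 1).

Lemma clamp_in s : 0 <= clamp s <= 1.
Proof.
  unfold clamp. split; [apply Rmax_l|]. apply Rmax_lub; [lra|apply Rmin_r].
Qed.

Lemma clamp_id s : 0 <= s <= 1 -> clamp s = s.
Proof.
  intros H. unfold clamp. rewrite Rmin_left by lra. rewrite Rmax_right by lra. auto.
Qed.

Lemma clamp_lip a b : Rabs (clamp a - clamp b) <= Rabs (a - b).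
Proof.
  unfold clamp, Rmax, Rmin.
  destruct (Rle_dec a 1); destruct (Rle_dec b 1); destruct (Rle_dec 0 a); destruct (Rle_dec 0 b);
  destruct (Rle_dec 0 1); try lra;
  repeat match goal with |- context [Rle_dec ?x ?y] => destruct (Rle_dec x y) end;
  unfold Rabs; repeat destruct (Rcase_abs _); lra.
Qed.

Lemma cont_clamp_comp (f : R -> R) :
  (forall x, 0 <= x <= 1 -> forall eps, 0 < eps -> exists del, 0 < del /\
     forall y, 0 <= y <= 1 -> Rabs (y - x) < del -> Rabs (f y - f x) < eps) ->
  forall s, continuity_pt (fun s => f (clamp s)) s.
Proof.
  intros H s. apply eps_cont. intros eps He.
  destruct (H (clamp s) (clamp_in s) eps He) as [del [Hd Hy]].
  exists del. split; auto. intros y Hys. apply Hy. apply clamp_in.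
  pose proof (clamp_lip y s). lra.
Qed.

Lemma E_lim_minus (g g1 g2 G : R -> R) K :
  (forall x, derivable_pt_lim g x (g1 x)) -> (forall x, derivable_pt_lim g1 x (g2 x)) ->
  (forall x, 0 <= g x <= 1) -> 0 < K -> (forall x, Rabs (g2 x) <= K) ->
  continuity_pt G 1 -> lim_minus_inf g 1 ->
  forall eps, 0 < eps -> exists M, forall x, x <= M ->
    Rabs (g1 x * g1 x / 2 + G (g x) - G 1) < eps.
Proof.
  intros H1 H2 Hg HK HB HG Hl eps He.
  destruct (level_lemma g g1 g2 K H1 H2 Hg HK HB (Rmin 1 (eps/2))) as [d1 [Hd1 Hl1]].
  { apply Rmin_glb_lt; lra. }
  destruct (cont_eps G 1 HG (eps/2) ltac:(lra)) as [d2 [Hd2 Hl2]].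
  destruct (Hl (Rmin d1 d2)) as [M HM]. { apply Rmin_glb_lt; lra. }
  exists M. intros x Hx. specialize (HM x Hx).
  assert (Rmin d1 d2 <= d1) by apply Rmin_l. assert (Rmin d1 d2 <= d2) by apply Rmin_r.
  assert (A1 : Rabs (g1 x) < Rmin 1 (eps/2)).
  { apply Hl1. right. apply Rabs_def2 in HM. lra. }
  assert (A2 : Rabs (G (g x) - G 1) < eps/2) by (apply Hl2; lra).
  assert (Rmin 1 (eps/2) <= 1) by apply Rmin_l. assert (Rmin 1 (eps/2) <= eps/2) by apply Rmin_r.
  assert (Rabs (g1 x * g1 x / 2) < eps / 2).
  { replace (g1 x * g1 x / 2) with (Rabs (g1 x) * Rabs (g1 x) / 2)
      by (rewrite <- Rabs_mult; rewrite Rabs_right; [field|]; apply Rle_ge;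
          replace (g1 x * g1 x) with (Rsqr (g1 x)) by reflexivity; apply Rle_0_sqr).
    pose proof (Rabs_pos (g1 x)). rewrite Rabs_right by (apply Rle_ge; nra). nra. }
  replace (g1 x * g1 x / 2 + G (g x) - G 1) with (g1 x * g1 x / 2 + (G (g x) - G 1)) by ring.
  pose proof (Rabs_triang (g1 x * g1 x / 2) (G (g x) - G 1)). lra.
Qed.

Lemma E_lim_plus (g g1 g2 G : R -> R) K :
  (forall x, derivable_pt_lim g x (g1 x)) -> (forall x, derivable_pt_lim g1 x (g2 x)) ->
  (forall x, 0 <= g x <= 1) -> 0 < K -> (forall x, Rabs (g2 x) <= K) ->
  continuity_pt G 0 -> lim_plus_inf g 0 ->
  forall eps, 0 < eps -> exists M, forall x, x >= M ->
    Rabs (g1 x * g1 x / 2 + G (g x) - G 0) < eps.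
Proof.
  intros H1 H2 Hg HK HB HG Hl eps He.
  destruct (level_lemma g g1 g2 K H1 H2 Hg HK HB (Rmin 1 (eps/2))) as [d1 [Hd1 Hl1]].
  { apply Rmin_glb_lt; lra. }
  destruct (cont_eps G 0 HG (eps/2) ltac:(lra)) as [d2 [Hd2 Hl2]].
  destruct (Hl (Rmin d1 d2)) as [M HM]. { apply Rmin_glb_lt; lra. }
  exists M. intros x Hx. specialize (HM x Hx).
  assert (Rmin d1 d2 <= d1) by apply Rmin_l. assert (Rmin d1 d2 <= d2) by apply Rmin_r.
  assert (A1 : Rabs (g1 x) < Rmin 1 (eps/2)).
  { apply Hl1. left. apply Rabs_def2 in HM. lra. }
  assert (A2 : Rabs (G (g x) - G 0) < eps/2) by (apply Hl2; lra).
  assert (Rmin 1 (eps/2) <= 1) by apply Rmin_l. assert (Rmin 1 (eps/2) <= eps/2) by apply Rmin_r.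
  assert (Rabs (g1 x * g1 x / 2) < eps / 2).
  { replace (g1 x * g1 x / 2) with (Rabs (g1 x) * Rabs (g1 x) / 2)
      by (rewrite <- Rabs_mult; rewrite Rabs_right; [field|]; apply Rle_ge;
          replace (g1 x * g1 x) with (Rsqr (g1 x)) by reflexivity; apply Rle_0_sqr).
    pose proof (Rabs_pos (g1 x)). rewrite Rabs_right by (apply Rle_ge; nra). nra. }
  replace (g1 x * g1 x / 2 + G (g x) - G 0) with (g1 x * g1 x / 2 + (G (g x) - G 0)) by ring.
  pose proof (Rabs_triang (g1 x * g1 x / 2) (G (g x) - G 0)). lra.
Qed.

Lemma mono_bounds (E : R -> R) L1 L2 :
  (forall a b, a <= b -> E b <= E a) ->
  (forall eps, 0 < eps -> exists M, forall x, x <= M -> Rabs (E x - L1) < eps) ->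
  (forall eps, 0 < eps -> exists M, forall x, x >= M -> Rabs (E x - L2) < eps) ->
  forall x, L2 <= E x <= L1.
Proof.
  intros Hm H1 H2 x. split.
  - destruct (Rle_or_lt L2 (E x)) as [|Hlt]; auto. exfalso.
    destruct (H2 (L2 - E x) ltac:(lra)) as [M HM].
    specialize (HM (Rmax M x) (Rle_ge _ _ (Rmax_l _ _))).
    pose proof (Hm x (Rmax M x) (Rmax_r _ _)). apply Rabs_def2 in HM. lra.
  - destruct (Rle_or_lt (E x) L1) as [|Hlt]; auto. exfalso.
    destruct (H1 (E x - L1) ltac:(lra)) as [M HM].
    specialize (HM (Rmin M x) (Rmin_l _ _)).
    pose proof (Hm (Rmin M x) x (Rmin_r _ _)). apply Rabs_def2 in HM. lra.
Qed.

Lemma div_lt_helper A B e : 0 < B -> A < e * B -> A / B < e.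
Proof.
  intros HB H. unfold Rdiv. apply Rmult_lt_reg_r with B; auto.
  rewrite Rmult_assoc, Rinv_l by lra. lra.
Qed.

Lemma inv_deriv (u Y : R -> R) s L :
  derivable_pt_lim u (Y s) L -> L <> 0 ->
  (exists rho, 0 < rho /\ forall t, Rabs (t - s) < rho -> u (Y t) = t) ->
  (forall eps, 0 < eps -> exists del, 0 < del /\ forall t, Rabs (t - s) < del -> Rabs (Y t - Y s) < eps) ->
  derivable_pt_lim Y s (1 / L).
Proof.
  intros Hd HL [rho [Hrho Hinv]] Hc eps He.
  assert (HaL : 0 < Rabs L) by (apply Rabs_pos_lt; auto).
  set (eta := Rmin (Rabs L / 2) (eps * (Rabs L * Rabs L) / 4)).
  assert (Heta : 0 < eta) by (unfold eta; apply Rmin_glb_lt; [lra|];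
     assert (0 < Rabs L * Rabs L) by nra; nra).
  assert (Heta1 : eta <= Rabs L / 2) by apply Rmin_l.
  assert (Heta2 : eta <= eps * (Rabs L * Rabs L) / 4) by apply Rmin_r.
  destruct (Hd eta Heta) as [d1 Hd1].
  assert (Hd1p : 0 < d1) by (destruct d1; simpl; lra).
  destruct (Hc d1 Hd1p) as [d2 [Hd2 Hc2]].
  assert (Hdp : 0 < Rmin d2 rho) by (apply Rmin_glb_lt; lra).
  exists (mkposreal _ Hdp). intros h Hh0 Hh. simpl in Hh.
  assert (Rmin d2 rho <= d2) by apply Rmin_l. assert (Rmin d2 rho <= rho) by apply Rmin_r.
  assert (Hts : Rabs (s + h - s) < rho) by (replace (s + h - s) with h by ring; lra).
  assert (Hss : Rabs (s - s) < rho) by (replace (s - s) with 0 by ring; rewrite Rabs_R0; lra).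
  pose proof (Hinv _ Hts) as Ut. pose proof (Hinv _ Hss) as Us.
  set (k := Y (s + h) - Y s).
  assert (Hk0 : k <> 0).
  { intro Hk. unfold k in Hk. assert (Y (s + h) = Y s) by lra.
    rewrite H1 in Ut. lra. }
  assert (Hkd : Rabs k < d1).
  { apply Hc2. replace (s + h - s) with h by ring. lra. }
  specialize (Hd1 k Hk0 Hkd).
  replace (Y s + k) with (Y (s + h)) in Hd1 by (unfold k; ring).
  rewrite Ut, Us in Hd1.
  replace (s + h - s) with h in Hd1 by ring.
  set (D := h / k) in *.
  assert (HD : Rabs (D - L) < eta) by exact Hd1.
  assert (HDL : Rabs L / 2 <= Rabs D).
  { pose proof (Rabs_triang_inv L (L - D)). replace (L - (L - D)) with D in H1 by ring.
    rewrite <- Rabs_Ropp in HD. replace (- (D - L)) with (L - D) in HD by ring. lra. }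
  assert (HD0 : D <> 0) by (intro HD0; rewrite HD0, Rabs_R0 in HDL; lra).
  replace (k / h - 1 / L) with ((L - D) / (D * L)).
  2:{ unfold D. fold k. field. auto. }
  unfold Rdiv. rewrite Rabs_mult, Rabs_inv. fold (Rdiv (Rabs (L - D)) (Rabs (D * L))).
  rewrite Rabs_mult. apply div_lt_helper; [apply Rmult_lt_0_compat; lra|].
  rewrite <- Rabs_Ropp. replace (- (L - D)) with (D - L) by ring.
  assert (Rabs L / 2 * Rabs L <= Rabs D * Rabs L) by (apply Rmult_le_compat_r; lra).
  assert (eps * (Rabs L * Rabs L) / 4 < eps * (Rabs L / 2 * Rabs L)) by nra.
  nra.
Qed.

Lemma ivt_down (g : R -> R) a b v : a < b -> (forall x, a <= x <= b -> continuity_pt g x) ->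
  v < g a -> g b < v -> exists t, a <= t <= b /\ g t = v.
Proof.
  intros Hab Hc Ha Hb.
  destruct (IVT_interv (fun y => v - g y) a b) as [t [Ht Hf]]; auto; try lra.
  - intros x Hx. apply continuity_pt_minus; [apply continuity_pt_const; intros ? ?; auto|].
    apply Hc; auto.
  - exists t. split; auto. lra.
Qed.

Lemma ivt_up (g : R -> R) a b v : a < b -> (forall x, a <= x <= b -> continuity_pt g x) ->
  g a < v -> v < g b -> exists t, a <= t <= b /\ g t = v.
Proof.
  intros Hab Hc Ha Hb.
  destruct (IVT_interv (fun y => g y - v) a b) as [t [Ht Hf]]; auto; try lra.
  - intros x Hx. apply continuity_pt_minus; [apply Hc; auto|].
    apply continuity_pt_const; intros ? ?; auto.
  - exists t. split; auto. lra.
Qed.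

Lemma hits_level (g g1 : R -> R) v :
  (forall x, derivable_pt_lim g x (g1 x)) -> lim_minus_inf g 1 -> lim_plus_inf g 0 ->
  0 < v < 1 -> forall x0, exists a b, a < b /\ b > x0 /\ a < x0 /\ g a > v /\ g b < v.
Proof.
  intros Hd Hm Hp Hv x0.
  destruct (Hm (1 - v) ltac:(lra)) as [M1 HM1].
  destruct (Hp v ltac:(lra)) as [M2 HM2].
  exists (Rmin M1 x0 - 1), (Rmax M2 x0 + 1).
  assert (Rmin M1 x0 <= M1) by apply Rmin_l. assert (Rmin M1 x0 <= x0) by apply Rmin_r.
  assert (M2 <= Rmax M2 x0) by apply Rmax_l. assert (x0 <= Rmax M2 x0) by apply Rmax_r.
  specialize (HM1 (Rmin M1 x0 - 1) ltac:(lra)). specialize (HM2 (Rmax M2 x0 + 1) ltac:(lra)).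
  apply Rabs_def2 in HM1. apply Rabs_def2 in HM2.
  repeat split; lra.
Qed.

Lemma inverse_setup (u U1 : R -> R) :
  (forall x, derivable_pt_lim u x (U1 x)) -> (forall x, 0 <= u x <= 1) ->
  lim_minus_inf u 1 -> lim_plus_inf u 0 ->
  (forall x, U1 x <= 0) -> (forall x, 0 < u x < 1 -> U1 x < 0) ->
  exists Y : R -> R, (forall s, 0 < s < 1 -> u (Y s) = s) /\
     (forall s, 0 < s < 1 -> derivable_pt_lim Y s (1 / U1 (Y s))).
Proof.
  intros Hd Hu Hm Hp Hneg Hneg2.
  assert (Hc : forall x, continuity_pt u x) by (intro x; apply (cont_of_deriv _ _ _ (Hd x))).
  assert (Hmon : forall a b, a <= b -> u b <= u a)
    by (intros a b Hab; apply (deriv_le0_decr u U1); auto).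
  assert (Hstrict : forall y y', y < y' -> (0 < u y < 1 \/ 0 < u y' < 1) -> u y' < u y).
  { intros y y' Hyy' Hor. destruct (Rlt_or_le (u y') (u y)) as [|Hge]; auto. exfalso.
    assert (Heq : u y' = u y) by (pose proof (Hmon y y' ltac:(lra)); lra).
    assert (Hin : forall m, y <= m <= y' -> 0 < u m < 1).
    { intros m Hm'. pose proof (Hmon y m ltac:(lra)). pose proof (Hmon m y' ltac:(lra)).
      destruct Hor; lra. }
    assert (u y' < u y).
    { apply (deriv_lt0_sdecr u U1); [lra|intros; apply Hd|intros m Hm'; apply Hneg2; apply Hin; auto]. }
    lra. }
  assert (Hex : forall s, 0 < s < 1 -> exists y, u y = s).
  { intros s Hs. destruct (hits_level u U1 s Hd Hm Hp Hs 0) as [a [b [Hab [_ [_ [Ha Hb]]]]]].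
    destruct (ivt_down u a b s Hab (fun x _ => Hc x) Ha Hb) as [t [_ Ht]]. exists t; auto. }
  set (Y := fun s => epsilon (inhabits 0) (fun y => u y = s)).
  assert (HY : forall s, 0 < s < 1 -> u (Y s) = s).
  { intros s Hs. unfold Y. apply (epsilon_spec (inhabits 0) (fun y => u y = s)). apply Hex; auto. }
  exists Y. split; auto.
  intros s Hs.
  assert (HYs := HY s Hs).
  apply inv_deriv with (u := u).
  - apply Hd.
  - assert (U1 (Y s) < 0) by (apply Hneg2; lra). lra.
  - exists (Rmin s (1 - s)). split; [apply Rmin_glb_lt; lra|].
    intros t Ht. apply HY.
    assert (Rmin s (1 - s) <= s) by apply Rmin_l. assert (Rmin s (1 - s) <= 1 - s) by apply Rmin_r.
    apply Rabs_def2 in Ht. lra.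
  - intros eps He. remember (Y s) as y0 eqn:Hy0.
    assert (A1 : u (y0 - eps) > s) by (rewrite <- HYs; apply Hstrict; [lra|right; lra]).
    assert (A2 : u (y0 + eps) < s) by (rewrite <- HYs; apply Hstrict; [lra|left; lra]).
    exists (Rmin (u (y0 - eps) - s) (s - u (y0 + eps))).
    split; [apply Rmin_glb_lt; lra|].
    intros t Ht.
    assert (Rmin (u (y0 - eps) - s) (s - u (y0 + eps)) <= u (y0 - eps) - s) by apply Rmin_l.
    assert (Rmin (u (y0 - eps) - s) (s - u (y0 + eps)) <= s - u (y0 + eps)) by apply Rmin_r.
    apply Rabs_def2 in Ht.
    pose proof (Hu (y0 - eps)). pose proof (Hu (y0 + eps)).
    assert (Hut : u (Y t) = t) by (apply HY; lra).
    apply Rabs_def1.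
    + destruct (Rlt_or_le (Y t) (y0 + eps)) as [|Hq]; [lra|].
      pose proof (Hmon (y0 + eps) (Y t) Hq). lra.
    + destruct (Rlt_or_le (y0 - eps) (Y t)) as [|Hq]; [lra|].
      pose proof (Hmon (Y t) (y0 - eps) Hq). lra.
Qed.

Lemma core (w W1 W2 u U1 U2 gc h : R -> R) (c c0 w1 Kw Ku : R) :
  (forall x, derivable_pt_lim w x (W1 x)) -> (forall x, derivable_pt_lim W1 x (W2 x)) ->
  (forall x, derivable_pt_lim u x (U1 x)) -> (forall x, derivable_pt_lim U1 x (U2 x)) ->
  (forall x, 0 <= w x <= 1) -> (forall x, 0 <= u x <= 1) ->
  lim_minus_inf w 1 -> lim_plus_inf w 0 -> lim_minus_inf u 1 -> lim_plus_inf u 0 ->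
  (forall a b, a <= b -> w b <= w a) ->
  (forall x, U1 x <= 0) -> (forall x, 0 < u x < 1 -> U1 x < 0) ->
  (forall x, 0 <= h x) ->
  (forall x, W2 x = - c * W1 x - gc (w x) + h x) ->
  (forall x, U2 x = - c0 * U1 x - gc (u x)) ->
  0 < w1 < 1 -> (forall s, 0 <= s <= w1 -> gc s <= 0) -> (forall s, w1 <= s <= 1 -> 0 <= gc s) ->
  c0 < c -> 0 < Kw -> (forall x, Rabs (W2 x) <= Kw) -> 0 < Ku -> (forall x, Rabs (U2 x) <= Ku) ->
  False.
Proof.
  intros Hw1 Hw2 Hu1 Hu2 Hw Hu Hwm Hwp Hum Hup Hmon HU1 HU1s Hh HW2 HU2 Hw1r Hgl Hgr Hcc HKw HKwb HKu HKub.
  destruct (inverse_setup u U1 Hu1 Hu Hum Hup HU1 HU1s) as [Y [HY HYd]].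
  assert (Hwc : forall x, continuity_pt w x) by (intro x; apply (cont_of_deriv _ _ _ (Hw1 x))).
  assert (HW1 : forall x, W1 x <= 0) by (intro x; apply (deriv_le0_of_decr w x); auto).
  set (inK := fun x => 0 < w x < 1).
  assert (HKc : forall a b t, inK a -> inK b -> a <= t <= b -> inK t).
  { intros a b t Ha Hb Ht. unfold inK in *. pose proof (Hmon a t ltac:(lra)).
    pose proof (Hmon t b ltac:(lra)). lra. }
  assert (HuT : forall x, inK x -> u (Y (w x)) = w x) by (intros x Hx; apply HY; auto).
  assert (HVT : forall x, inK x -> U1 (Y (w x)) < 0).
  { intros x Hx. apply HU1s. rewrite HuT; auto. }
  set (Z := fun x => - W1 x + U1 (Y (w x))).
  set (Z' := fun x => - W2 x + U2 (Y (w x)) * (1 / U1 (Y (w x)) * W1 x)).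
  assert (HZd : forall x, inK x -> derivable_pt_lim Z x (Z' x)).
  { intros x Hx.
    assert (D1 : derivable_pt_lim (fun x => - W1 x) x (- W2 x))
      by exact (derivable_pt_lim_opp W1 x (W2 x) (Hw2 x)).
    assert (D0 : derivable_pt_lim (fun x => Y (w x)) x (1 / U1 (Y (w x)) * W1 x))
      by exact (derivable_pt_lim_comp w Y x (W1 x) _ (Hw1 x) (HYd (w x) Hx)).
    assert (D2 : derivable_pt_lim (fun x => U1 (Y (w x))) x (U2 (Y (w x)) * (1 / U1 (Y (w x)) * W1 x)))
      by exact (derivable_pt_lim_comp (fun x => Y (w x)) U1 x _ _ D0 (Hu2 _)).
    exact (derivable_pt_lim_plus _ _ x _ _ D1 D2). }
  assert (Halg : forall x, inK x ->
    Z' x - (c - c0) * W1 x = - h x + gc (w x) * Z x / U1 (Y (w x))).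
  { intros x Hx. pose proof (HVT x Hx). unfold Z', Z. rewrite HW2, HU2, HuT by auto.
    field. lra. }
  assert (Hzero : forall x, inK x -> Z x = 0 -> Z' x < 0).
  { intros x Hx Hz. pose proof (Halg x Hx). rewrite Hz in H.
    pose proof (HVT x Hx). pose proof (Hh x).
    assert (W1 x = U1 (Y (w x))) by (unfold Z in Hz; lra).
    assert (gc (w x) * 0 / U1 (Y (w x)) = 0) by (field; lra).
    rewrite H3 in H. nra. }
  set (Phi := fun x => Z x - (c - c0) * w x).
  assert (HPd : forall x, inK x -> derivable_pt_lim Phi x (Z' x - (c - c0) * W1 x)).
  { intros x Hx. apply derivable_pt_lim_minus; [apply HZd; auto|].
    apply derivable_pt_lim_scal with (f := w). apply Hw1. }
  assert (HZsmall : forall eta t, 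
     Rabs (W1 t) < eta / 2 -> Rabs (U1 (Y (w t))) < eta / 2 -> Rabs (Z t) < eta).
  { intros eta t H H0. unfold Z.
    pose proof (Rabs_triang (- W1 t) (U1 (Y (w t)))). rewrite Rabs_Ropp in H1. lra. }
  assert (Hend_r : forall eta x, 0 < eta -> inK x ->
     exists t, x <= t /\ inK t /\ w t < eta /\ Rabs (Z t) < eta).
  { intros eta x He Hx.
    destruct (level_lemma w W1 W2 Kw Hw1 Hw2 Hw HKw HKwb (eta/2) ltac:(lra)) as [dw [Hdw Lw]].
    destruct (level_lemma u U1 U2 Ku Hu1 Hu2 Hu HKu HKub (eta/2) ltac:(lra)) as [du [Hdu Lu]].
    set (lam := Rmin (Rmin eta dw) (Rmin du (w x)) / 2).
    assert (Rmin (Rmin eta dw) (Rmin du (w x)) <= Rmin eta dw) by apply Rmin_l.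
    assert (Rmin (Rmin eta dw) (Rmin du (w x)) <= Rmin du (w x)) by apply Rmin_r.
    assert (Rmin eta dw <= eta) by apply Rmin_l. assert (Rmin eta dw <= dw) by apply Rmin_r.
    assert (Rmin du (w x) <= du) by apply Rmin_l. assert (Rmin du (w x) <= w x) by apply Rmin_r.
    assert (0 < Rmin (Rmin eta dw) (Rmin du (w x))).
    { apply Rmin_glb_lt; apply Rmin_glb_lt; unfold inK in Hx; lra. }
    assert (Hl0 : 0 < lam) by (unfold lam; lra).
    assert (Hlx : lam < w x) by (unfold lam; lra).
    destruct (Hwp lam Hl0) as [M HM].
    specialize (HM (Rmax M x) (Rle_ge _ _ (Rmax_l _ _))).
    assert (x <= Rmax M x) by apply Rmax_r.
    apply Rabs_def2 in HM.
    assert (Hxt : x < Rmax M x) by (destruct (Req_dec x (Rmax M x)) as [He2|]; [rewrite <- He2 in HM; lra|lra]).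
    destruct (ivt_down w x (Rmax M x) lam Hxt (fun y _ => Hwc y) ltac:(lra) ltac:(lra)) as [t [Ht Hwt]].
    assert (inK t) by (unfold inK in *; lra).
    exists t. split; [lra|]. split; auto. split; [unfold lam in Hwt; lra|].
    apply HZsmall.
    - apply Lw. left. unfold lam in Hwt. lra.
    - apply Lu. left. rewrite HuT by auto. unfold lam in Hwt. lra. }
  assert (Hend_l : forall eta x, 0 < eta -> inK x ->
     exists t, t <= x /\ inK t /\ 1 - eta < w t /\ Rabs (Z t) < eta).
  { intros eta x He Hx.
    destruct (level_lemma w W1 W2 Kw Hw1 Hw2 Hw HKw HKwb (eta/2) ltac:(lra)) as [dw [Hdw Lw]].
    destruct (level_lemma u U1 U2 Ku Hu1 Hu2 Hu HKu HKub (eta/2) ltac:(lra)) as [du [Hdu Lu]].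
    set (lam := Rmin (Rmin eta dw) (Rmin du (1 - w x)) / 2).
    assert (Rmin (Rmin eta dw) (Rmin du (1 - w x)) <= Rmin eta dw) by apply Rmin_l.
    assert (Rmin (Rmin eta dw) (Rmin du (1 - w x)) <= Rmin du (1 - w x)) by apply Rmin_r.
    assert (Rmin eta dw <= eta) by apply Rmin_l. assert (Rmin eta dw <= dw) by apply Rmin_r.
    assert (Rmin du (1 - w x) <= du) by apply Rmin_l. assert (Rmin du (1 - w x) <= 1 - w x) by apply Rmin_r.
    assert (0 < Rmin (Rmin eta dw) (Rmin du (1 - w x))).
    { apply Rmin_glb_lt; apply Rmin_glb_lt; unfold inK in Hx; lra. }
    assert (Hl0 : 0 < lam) by (unfold lam; lra).
    assert (Hlx : w x < 1 - lam) by (unfold lam; lra).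
    destruct (Hwm lam Hl0) as [M HM].
    specialize (HM (Rmin M x) (Rmin_l _ _)).
    assert (Rmin M x <= x) by apply Rmin_r.
    apply Rabs_def2 in HM.
    assert (Hxt : Rmin M x < x) by (destruct (Req_dec x (Rmin M x)) as [He2|]; [rewrite <- He2 in HM; lra|lra]).
    destruct (ivt_down w (Rmin M x) x (1 - lam) Hxt (fun y _ => Hwc y) ltac:(lra) ltac:(lra)) as [t [Ht Hwt]].
    assert (inK t) by (unfold inK in *; lra).
    exists t. split; [lra|]. split; auto. split; [unfold lam in Hwt; lra|].
    apply HZsmall.
    - apply Lw. right. unfold lam in Hwt. lra.
    - apply Lu. right. rewrite HuT by auto. unfold lam in Hwt. lra. }
  assert (Hsign : forall m, inK m -> 0 <= gc (w m) * Z m -> Z' m - (c - c0) * W1 m <= 0).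
  { intros m Hm Hp. rewrite Halg by auto. pose proof (HVT m Hm). pose proof (Hh m).
    assert (/ U1 (Y (w m)) < 0) by (apply Rinv_lt_0_compat; lra).
    unfold Rdiv. nra. }
  assert (HZc : forall a b, a < b -> inK a -> inK b -> Z a <= 0 -> Z b < 0).
  { intros a b Hab Ha Hb Hza. apply (no_up_cross Z Z' a b Hab); auto.
    - intros m Hm. apply HZd. apply (HKc a b); auto.
    - intros m Hm Hz. apply Hzero; auto. apply (HKc a b); auto. }
  destruct (hits_level w W1 w1 Hw1 Hwm Hwp Hw1r 0) as [a [b [Hab [_ [_ [Ha Hb]]]]]].
  destruct (ivt_down w a b w1 Hab (fun y _ => Hwc y) Ha Hb) as [xs [_ Hxs]].
  assert (Kxs : inK xs) by (unfold inK; lra).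
  assert (Hpos : 0 < c - c0) by lra.
  assert (Left : 0 < Z xs).
  { destruct (Rlt_or_le 0 (Z xs)) as [|Hle]; auto. exfalso.
    set (eps := (c - c0) * w1 / (2 * (1 + (c - c0)))).
    assert (Heps : 0 < eps) by (unfold eps; apply Rdiv_lt_0_compat; nra).
    destruct (Hend_r eps xs Heps Kxs) as [t [Ht [Kt [Hwt HZt]]]].
    assert (HP : Phi t <= Phi xs).
    { destruct (Req_dec xs t) as [<-|Hne]; [lra|].
      apply (deriv_le0_decr Phi (fun x => Z' x - (c - c0) * W1 x)); [lra| |].
      - intros m Hm. apply HPd. apply (HKc xs t); auto.
      - intros m Hm. assert (Km : inK m) by (apply (HKc xs t); auto).
        apply Hsign; auto.
        assert (Zm : Z m <= 0).
        { destruct (Req_dec xs m) as [<-|]; auto. left. apply (HZc xs m); auto; lra. }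
        assert (gc (w m) <= 0) by (apply Hgl; pose proof (Hmon xs m ltac:(lra)); pose proof (Hw m); lra).
        nra. }
    unfold Phi in HP. apply Rabs_def2 in HZt.
    assert ((c - c0) * w t <= (c - c0) * eps) by (apply Rmult_le_compat_l; lra).
    assert (eps * (2 * (1 + (c - c0))) = (c - c0) * w1) by (unfold eps; field; lra).
    nra. }
  assert (Right : Z xs < 0).
  { destruct (Rlt_or_le (Z xs) 0) as [|Hge]; auto. exfalso.
    set (eps := (c - c0) * (1 - w1) / (2 * (1 + (c - c0)))).
    assert (Heps : 0 < eps) by (unfold eps; apply Rdiv_lt_0_compat; nra).
    destruct (Hend_l eps xs Heps Kxs) as [t [Ht [Kt [Hwt HZt]]]].
    assert (HP : Phi xs <= Phi t).
    { destruct (Req_dec xs t) as [<-|Hne]; [lra|].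
      apply (deriv_le0_decr Phi (fun x => Z' x - (c - c0) * W1 x)); [lra| |].
      - intros m Hm. apply HPd. apply (HKc t xs); auto.
      - intros m Hm. assert (Km : inK m) by (apply (HKc t xs); auto).
        apply Hsign; auto.
        assert (Zm : 0 <= Z m).
        { destruct (Req_dec xs m) as [<-|]; auto.
          destruct (Rlt_or_le 0 (Z m)) as [|Hzm]; [lra|].
          pose proof (HZc m xs ltac:(lra) Km Kxs Hzm). lra. }
        assert (0 <= gc (w m)) by (apply Hgr; pose proof (Hmon m xs ltac:(lra)); pose proof (Hw m); lra).
        nra. }
    unfold Phi in HP. apply Rabs_def2 in HZt.
    assert ((c - c0) * (1 - w t) <= (c - c0) * eps) by (apply Rmult_le_compat_l; lra).
    assert (eps * (2 * (1 + (c - c0))) = (c - c0) * (1 - w1)) by (unfold eps; field; lra).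
    nra. }
  lra.
Qed.

Lemma energy_deriv (g g1 g2 G gf : R -> R) x :
  derivable_pt_lim g x (g1 x) -> derivable_pt_lim g1 x (g2 x) ->
  derivable_pt_lim G (g x) (gf (g x)) ->
  derivable_pt_lim (fun x => g1 x * g1 x / 2 + G (g x)) x (g1 x * g2 x + gf (g x) * g1 x).
Proof.
  intros H1 H2 H3.
  assert (D1 : derivable_pt_lim (fun x => g1 x * g1 x * / 2) x
                 ((g2 x * g1 x + g1 x * g2 x) * / 2 + g1 x * g1 x * 0)).
  { apply (derivable_pt_lim_mult (fun x => g1 x * g1 x) (fun _ => / 2)).
    - exact (derivable_pt_lim_mult g1 g1 x _ _ H2 H2).
    - apply derivable_pt_lim_const. }
  assert (D2 : derivable_pt_lim (fun x => G (g x)) x (gf (g x) * g1 x))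
    by exact (derivable_pt_lim_comp g G x _ _ H1 H3).
  replace (g1 x * g2 x + gf (g x) * g1 x)
    with ((g2 x * g1 x + g1 x * g2 x) * / 2 + g1 x * g1 x * 0 + gf (g x) * g1 x) by field.
  exact (derivable_pt_lim_plus _ _ x _ _ D1 D2).
Qed.

Lemma lim_const_zero (u : R -> R) x : lim_plus_inf u 0 -> (forall y, y >= x -> u y = u x) -> u x = 0.
Proof.
  intros Hl Hc. destruct (Req_dec (u x) 0) as [|Hne]; auto. exfalso.
  destruct (Hl (Rabs (u x)) (Rabs_pos_lt _ Hne)) as [M HM].
  specialize (HM (Rmax M x) (Rle_ge _ _ (Rmax_l _ _))).
  rewrite Hc in HM by (apply Rle_ge, Rmax_r). rewrite Rminus_0_r in HM. lra.
Qed.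

Lemma u_mono (u U1 U2 gc G : R -> R) c0 w1 Ku :
  (forall x, derivable_pt_lim u x (U1 x)) -> (forall x, derivable_pt_lim U1 x (U2 x)) ->
  (forall x, 0 <= u x <= 1) -> lim_minus_inf u 1 -> lim_plus_inf u 0 ->
  (forall x, U2 x = - c0 * U1 x - gc (u x)) -> 0 < c0 ->
  (forall s, derivable_pt_lim G s (gc s)) -> G 0 = 0 ->
  (forall s, 0 <= s <= w1 -> G s <= 0) -> (forall s, w1 < s < 1 -> 0 < gc s) ->
  0 < Ku -> (forall x, Rabs (U2 x) <= Ku) ->
  (forall x, U1 x <= 0) /\ (forall x, 0 < u x < 1 -> U1 x < 0).
Proof.
  intros Hu1 Hu2 Hu Hum Hup HU2 Hc0 HG HG0 HGl Hgr HKu HKub.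
  assert (Huc : forall x, continuity_pt u x) by (intro x; apply (cont_of_deriv _ _ _ (Hu1 x))).
  set (E := fun x => U1 x * U1 x / 2 + G (u x)).
  assert (HEd : forall x, derivable_pt_lim E x (- c0 * (U1 x * U1 x))).
  { intro x. replace (- c0 * (U1 x * U1 x)) with (U1 x * U2 x + gc (u x) * U1 x)
      by (rewrite HU2; ring).
    apply energy_deriv; auto. }
  assert (HEm : forall a b, a <= b -> E b <= E a).
  { intros a b Hab. apply (deriv_le0_decr E (fun x => - c0 * (U1 x * U1 x))); auto.
    intros x _. nra. }
  assert (HEb : forall x, 0 <= E x <= G 1).
  { intro x. rewrite <- HG0 at 1. apply (mono_bounds E (G 1) (G 0) HEm).
    - apply (E_lim_minus u U1 U2 G Ku); auto. apply (cont_of_deriv _ _ _ (HG 1)).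
    - apply (E_lim_plus u U1 U2 G Ku); auto. apply (cont_of_deriv _ _ _ (HG 0)). }
  assert (HE0 : forall x, E x = 0 -> (forall y, y >= x -> u y = u x) /\ u x = 0).
  { intros x Hx.
    assert (HU : forall y, y >= x -> U1 y = 0).
    { intros y Hy. assert (E y = 0) by (pose proof (HEm x y ltac:(lra)); pose proof (HEb y); lra).
      assert (- c0 * (U1 y * U1 y) = 0).
      { apply (deriv_zero_at_min E y _ 1 ltac:(lra)); auto.
        intros z _. pose proof (HEb z). lra. }
      assert (U1 y * U1 y = 0) by nra. nra. }
    assert (Hc : forall y, y >= x -> u y = u x).
    { intros y Hy. apply Rle_antisym.
      - apply (deriv_le0_decr u U1); [lra|intros; apply Hu1|intros z Hz; rewrite HU; lra].
      - apply (deriv_ge0_incr u U1); [lra|intros; apply Hu1|intros z Hz; rewrite HU; lra]. }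
    split; auto. apply lim_const_zero; auto. }
  assert (Hcrit : forall x, U1 x = 0 -> 0 < u x < 1 -> U2 x < 0).
  { intros x H0 Hx. assert (HEx : E x = G (u x)) by (unfold E; rewrite H0; field).
    assert (E x <> 0) by (intro He; destruct (HE0 x He); lra).
    assert (0 < G (u x)) by (pose proof (HEb x); lra).
    assert (w1 < u x) by (destruct (Rlt_or_le w1 (u x)); auto; pose proof (HGl (u x) ltac:(lra)); lra).
    rewrite HU2, H0. pose proof (Hgr (u x) ltac:(lra)). lra. }
  assert (Hneg : forall x, 0 < u x < 1 -> U1 x < 0).
  { intros x0 Hx0. destruct (Rlt_or_le (U1 x0) 0) as [|Hge]; auto. exfalso.
    assert (Sa : exists x0', 0 < u x0' < 1 /\ 0 < U1 x0').
    { destruct (Rlt_or_le 0 (U1 x0)) as [|Hle]. { exists x0; auto. }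
      assert (HU0 : U1 x0 = 0) by lra.
      pose proof (Hcrit x0 HU0 Hx0).
      destruct (cont_eps u x0 (Huc x0) (Rmin (u x0) (1 - u x0))) as [eta [Heta Heta2]].
      { apply Rmin_glb_lt; lra. }
      destruct (deriv_sign_h U1 x0 (U2 x0) (Hu2 x0) ltac:(lra) eta Heta) as [h [Hh [_ A2]]].
      exists (x0 + - h). rewrite HU0 in A2. split; [|nra].
      assert (Rabs (x0 + - h - x0) < eta) by (replace (x0 + - h - x0) with (-h) by ring;
        rewrite Rabs_Ropp, Rabs_right; lra).
      specialize (Heta2 _ H0). apply Rabs_def2 in Heta2.
      assert (Rmin (u x0) (1 - u x0) <= u x0) by apply Rmin_l.
      assert (Rmin (u x0) (1 - u x0) <= 1 - u x0) by apply Rmin_r. lra. }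
    destruct Sa as [x0' [Hx0' HU1p]].
    destruct (deriv_sign_h u x0' (U1 x0') (Hu1 x0') ltac:(lra) 1 ltac:(lra)) as [h [Hh [_ A2]]].
    set (b := x0' + - h).
    assert (Hb : u b < u x0') by (unfold b; nra).
    destruct (Hum (1 - u x0') ltac:(lra)) as [M HM].
    set (a := Rmin M b - 1).
    assert (Rmin M b <= M) by apply Rmin_l. assert (Rmin M b <= b) by apply Rmin_r.
    assert (Ha : u x0' < u a) by (specialize (HM a ltac:(unfold a; lra)); apply Rabs_def2 in HM; lra).
    assert (Hab : a < x0') by (unfold a, b in *; lra).
    destruct (continuity_ab_min u a x0' ltac:(lra) (fun c _ => Huc c)) as [x1 [Hmin Hx1]].
    assert (u x1 <= u b) by (apply Hmin; unfold a, b in *; lra).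
    assert (Hx1a : a < x1) by (destruct (Req_dec a x1) as [<-|]; [lra|lra]).
    assert (Hx1b : x1 < x0') by (destruct (Req_dec x1 x0') as [->|]; [lra|lra]).
    assert (HU1x1 : U1 x1 = 0).
    { apply (deriv_zero_at_min u x1 _ (Rmin (x1 - a) (x0' - x1))); auto.
      - apply Rmin_glb_lt; lra.
      - intros y Hy. apply Hmin. apply Rabs_def2 in Hy.
        assert (Rmin (x1 - a) (x0' - x1) <= x1 - a) by apply Rmin_l.
        assert (Rmin (x1 - a) (x0' - x1) <= x0' - x1) by apply Rmin_r. lra. }
    destruct (Rlt_or_le 0 (u x1)) as [Hpos|Hz].
    - assert (HU2x1 : U2 x1 < 0) by (apply Hcrit; auto; pose proof (Hu x0'); lra).
      destruct (deriv_sign_all U1 x1 (U2 x1) (Hu2 x1) ltac:(lra)) as [e2 [He2 Hall]].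
      set (h2 := Rmin e2 (x0' - x1) / 2).
      assert (Rmin e2 (x0' - x1) <= e2) by apply Rmin_l.
      assert (Rmin e2 (x0' - x1) <= x0' - x1) by apply Rmin_r.
      assert (0 < Rmin e2 (x0' - x1)) by (apply Rmin_glb_lt; lra).
      destruct (MVT_cor2 u U1 x1 (x1 + h2)) as [xi [Hxi Hxi2]]; [unfold h2; lra|intros; apply Hu1|].
      assert (HU1xi : U1 xi < 0).
      { destruct (Hall (xi - x1)) as [B1 _]; [unfold h2 in *; lra|].
        replace (x1 + (xi - x1)) with xi in B1 by ring. rewrite HU1x1 in B1. nra. }
      assert (u x1 <= u (x1 + h2)) by (apply Hmin; unfold h2; lra).
      assert (0 < h2) by (unfold h2; lra). nra.
    - assert (Hux1 : u x1 = 0) by (pose proof (Hu x1); lra).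
      assert (E x1 = 0) by (unfold E; rewrite HU1x1, Hux1, HG0; field).
      destruct (HE0 x1 H2) as [Hc _]. pose proof (Hc x0' ltac:(lra)). lra. }
  split; auto.
  intro x. destruct (Rlt_or_le 0 (u x)) as [Hp|Hz].
  - destruct (Rlt_or_le (u x) 1) as [Hl|Hg].
    + pose proof (Hneg x (conj Hp Hl)). lra.
    + assert (- U1 x = 0).
      { apply (deriv_zero_at_min (fun y => - u y) x _ 1 ltac:(lra)).
        - intros y _. pose proof (Hu y). lra.
        - exact (derivable_pt_lim_opp u x _ (Hu1 x)). }
      lra.
  - assert (U1 x = 0).
    { apply (deriv_zero_at_min u x _ 1 ltac:(lra)); auto.
      intros y _. pose proof (Hu y). lra. }
    lra.
Qed.

Lemma f0_cont (f0 : R -> R) : C1_on_01 f0 ->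
  forall x, 0 <= x <= 1 -> forall eps, 0 < eps -> exists del, 0 < del /\
     forall y, 0 <= y <= 1 -> Rabs (y - x) < del -> Rabs (f0 y - f0 x) < eps.
Proof.
  intros [g' [Hd _]] x Hx eps He. specialize (Hd x Hx).
  unfold limit1_in, limit_in in Hd. destruct (Hd 1 ltac:(lra)) as [alp [Halp Hy]].
  set (l := g' x) in *.
  assert (Hl : 0 < Rabs l + 1) by (pose proof (Rabs_pos l); lra).
  exists (Rmin alp (eps / (Rabs l + 1))). split.
  { apply Rmin_glb_lt; [lra|apply Rdiv_lt_0_compat; lra]. }
  intros y Hy01 Hyx.
  assert (Rmin alp (eps / (Rabs l + 1)) <= alp) by apply Rmin_l.
  assert (Rmin alp (eps / (Rabs l + 1)) <= eps / (Rabs l + 1)) by apply Rmin_r.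
  destruct (Req_dec y x) as [->|Hne].
  { replace (f0 x - f0 x) with 0 by ring. rewrite Rabs_R0; lra. }
  specialize (Hy y). simpl in Hy. unfold R_dist in Hy.
  assert (Hq : Rabs ((f0 y - f0 x) / (y - x) - l) < 1) by (apply Hy; split; [split; auto|lra]).
  set (q := (f0 y - f0 x) / (y - x)) in *.
  assert (Hfq : f0 y - f0 x = q * (y - x)) by (unfold q; field; lra).
  rewrite Hfq, Rabs_mult.
  assert (Rabs q < Rabs l + 1).
  { pose proof (Rabs_triang (q - l) l). replace (q - l + l) with q in H1 by ring. lra. }
  assert (Rabs (y - x) * (Rabs l + 1) < eps).
  { assert (Rabs (y - x) < eps / (Rabs l + 1)) by lra.
    apply (Rmult_lt_compat_r (Rabs l + 1)) in H2; auto.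
    replace (eps / (Rabs l + 1) * (Rabs l + 1)) with eps in H2 by (field; lra). lra. }
  pose proof (Rabs_pos q). pose proof (Rabs_pos (y - x)). nra.
Qed.

From Coquelicot Require Import Coquelicot.
Open Scope R_scope.

Lemma antideriv (g : R -> R) : (forall x, continuity_pt g x) ->
  forall s, derivable_pt_lim (fun s => RInt g 0 s) s (g s).
Proof.
  intros Hc s. apply is_derive_Reals.
  apply (is_derive_RInt g (fun s => RInt g 0 s) 0 s).
  - apply filter_forall. intros b. apply (@RInt_correct R_CompleteNormedModule). apply (@ex_RInt_continuous R_CompleteNormedModule).
    intros z _. apply continuity_pt_filterlim. apply Hc.
  - apply continuity_pt_filterlim. apply Hc.
Qed.

Lemma antideriv0 (g : R -> R) : RInt g 0 0 = 0.
Proof. apply (@RInt_point R_CompleteNormedModule). Qed.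

Theorem lemma4p1
  (f f1 f2 f3 f4 : R -> R)
  (Hd1 : forall x, derivable_pt_lim f x (f1 x))
  (Hd2 : forall x, derivable_pt_lim f1 x (f2 x))
  (Hd3 : forall x, derivable_pt_lim f2 x (f3 x))
  (Hd4 : forall x, derivable_pt_lim f3 x (f4 x))
  (Hc4 : continuity f4)
  (Hb1 : bounded_fun f1) (Hb2 : bounded_fun f2)
  (Hb3 : bounded_fun f3) (Hb4 : bounded_fun f4)
  (HF1a : forall w, 0 <= w < 1 -> f w > 0)
  (HF1b : f 1 = 0)
  (HF1c : f1 1 > -1)
  (HF2a : f 0 > 1)
  (HF2b : f1 0 > 0)
  (HF2c : exists wstar, 0 < wstar < 1 /\ forall w, 0 <= w < wstar -> f w > 1)
  (HF3 : exists w0, 0 < w0 < 1 /\ f w0 = 1 - w0 /\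
           (forall w, 0 < w < 1 -> f w = 1 - w -> w = w0) /\ f1 w0 < -1)
  (f0 : R -> R)
  (Hf0C1 : C1_on_01 f0)
  (Hf0mon : forall u v, 0 <= u -> u <= v -> v <= 1 -> f0 v <= f0 u)
  (Hf0le : forall w, 0 <= w <= 1 -> f0 w <= f w)
  (Hf00 : f0 0 > 1)
  (Hf01 : f0 1 = 0)
  (Hf0root : exists w1, 0 < w1 < 1 /\ 1 - w1 = f0 w1 /\
               forall w, 0 < w < 1 -> 1 - w = f0 w -> w = w1)
  (c0 : R)
  (Hc0ex : exists w, solves_nondelayed f0 c0 w)
  (Hc0uniq : forall c' w, solves_nondelayed f0 c' w -> c' = c0)
  (tau c : R) (Htau : 0 <= tau) (Hc : c > 0)
  (w : R -> R) (Hw : solves_P f tau c w)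
  (Hwmon : forall x y, x <= y -> w y <= w x) :
  c <= c0.
Proof.
  destruct (Rle_or_lt c c0) as [|Hlt]; auto. exfalso.
  destruct Hf0root as [r1 [Hr1 [Hr1e Hr1u]]].
  destruct Hc0ex as [u [U1 [U2 [[Hu1 [Hu2 _]] [Hu [HuE [Hum Hup]]]]]]].
  destruct Hw as [W1 [W2 [[Hw1 [Hw2 _]] [HwE [Hwm Hwp]]]]].
  pose proof (f0_cont f0 Hf0C1) as Hf0c.
  assert (Hf0r : forall s, 0 <= s <= 1 -> 0 <= f0 s <= f0 0).
  { intros s Hs. split.
    - rewrite <- Hf01. apply Hf0mon; lra.
    - apply Hf0mon; lra. }
  set (gc := fun s => clamp s * (1 - clamp s - f0 (clamp s))).
  assert (Hgce : forall s, 0 <= s <= 1 -> gc s = s * (1 - s - f0 s))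
    by (intros s Hs; unfold gc; rewrite clamp_id; auto).
  assert (Hclc : forall s, continuity_pt clamp s).
  { intro s. apply eps_cont. intros eps He. exists eps. split; auto. intros y Hy.
    pose proof (clamp_lip y s). lra. }
  assert (Hgcc : forall s, continuity_pt gc s).
  { intro s. unfold gc. apply continuity_pt_mult; [apply Hclc|].
    apply continuity_pt_minus; [apply continuity_pt_minus|].
    - apply continuity_pt_const. intros ? ?; auto.
    - apply Hclc.
    - apply (cont_clamp_comp f0 Hf0c s). }
  set (G := fun s => RInt gc 0 s).
  assert (HG : forall s, derivable_pt_lim G s (gc s)) by (apply antideriv; auto).
  assert (HG0 : G 0 = 0) by (apply antideriv0).
  assert (Hw01 : forall x, 0 <= w x <= 1).
  { intro x. split.
    - destruct (Rle_or_lt 0 (w x)) as [|Hn]; auto. exfalso.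
      destruct (Hwp (- w x) ltac:(lra)) as [M HM].
      specialize (HM (Rmax M x) (Rle_ge _ _ (Rmax_l _ _))).
      pose proof (Hwmon x (Rmax M x) (Rmax_r _ _)). apply Rabs_def2 in HM. lra.
    - destruct (Rle_or_lt (w x) 1) as [|Hn]; auto. exfalso.
      destruct (Hwm (w x - 1) ltac:(lra)) as [M HM].
      specialize (HM (Rmin M x) (Rmin_l _ _)).
      pose proof (Hwmon (Rmin M x) x (Rmin_r _ _)). apply Rabs_def2 in HM. lra. }
  destruct Hb1 as [M1 HM1].
  assert (HM1p : 0 <= M1) by (pose proof (HM1 0); pose proof (Rabs_pos (f1 0)); lra).
  assert (Hfb : forall s, 0 <= s <= 1 -> Rabs (f s) <= Rabs (f 0) + M1).
  { intros s Hs. pose proof (deriv_bound f f1 0 s M1 ltac:(lra) (fun x _ => Hd1 x) (fun x _ => HM1 x)).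
    replace (f s) with (f 0 + (f s - f 0)) by ring.
    pose proof (Rabs_triang (f 0) (f s - f 0)). nra. }
  set (h := fun x => w x * (f (w (x + c * tau)) - f0 (w x))).
  assert (Hh : forall x, 0 <= h x).
  { intro x. unfold h. pose proof (Hw01 x). pose proof (Hw01 (x + c * tau)).
    assert (w (x + c * tau) <= w x) by (apply Hwmon; nra).
    assert (f0 (w x) <= f0 (w (x + c * tau))) by (apply Hf0mon; lra).
    assert (f0 (w (x + c * tau)) <= f (w (x + c * tau))) by (apply Hf0le; lra).
    apply Rmult_le_pos; lra. }
  assert (HW2e : forall x, W2 x = - c * W1 x - gc (w x) + h x).
  { intro x. pose proof (HwE x). rewrite Hgce by auto. unfold h. lra. }
  assert (HU2e : forall x, U2 x = - c0 * U1 x - gc (u x)).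
  { intro x. pose proof (HuE x). rewrite Hgce by auto. lra. }
  set (NBw := 1 + (Rabs (f 0) + M1)).
  assert (HNw : forall x, Rabs (gc (w x) - h x) <= NBw).
  { intro x. rewrite Hgce by auto. unfold h, NBw.
    pose proof (Hw01 x). pose proof (Hw01 (x + c * tau)).
    pose proof (Hfb (w (x + c * tau)) ltac:(lra)).
    replace (w x * (1 - w x - f0 (w x)) - w x * (f (w (x + c * tau)) - f0 (w x)))
      with (w x * (1 - w x - f (w (x + c * tau)))) by ring.
    rewrite Rabs_mult. rewrite (Rabs_right (w x)) by lra.
    assert (Rabs (1 - w x - f (w (x + c * tau))) <= 1 + (Rabs (f 0) + M1)).
    { pose proof (Rabs_triang (1 - w x) (- f (w (x + c * tau)))). rewrite Rabs_Ropp in H2.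
      rewrite (Rabs_right (1 - w x)) in H2 by lra. replace (1 - w x - f (w (x + c * tau))) with ((1 - w x) + - f (w (x + c * tau))) by ring. lra. }
    pose proof (Rabs_pos (1 - w x - f (w (x + c * tau)))). nra. }
  assert (HNu : forall x, Rabs (gc (u x)) <= 1 + f0 0).
  { intro x. rewrite Hgce by auto. pose proof (Hu x). pose proof (Hf0r (u x) (Hu x)).
    rewrite Rabs_mult, (Rabs_right (u x)) by lra.
    assert (Rabs (1 - u x - f0 (u x)) <= 1 + f0 0) by (apply Rabs_le; lra).
    pose proof (Rabs_pos (1 - u x - f0 (u x))). nra. }
  pose proof (bound_deriv w W1 W2 (fun x => gc (w x) - h x) c NBw Hw1 Hw2 Hw01
     ltac:(intro x; rewrite HW2e; ring) HNw) as HBW1.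
  pose proof (bound_deriv u U1 U2 (fun x => gc (u x)) c0 (1 + f0 0) Hu1 Hu2 Hu
     ltac:(intro x; rewrite HU2e; ring) HNu) as HBU1.
  set (Kw := Rabs c * (1 + 2 * Rabs c + NBw) + NBw + 1).
  set (Ku := Rabs c0 * (1 + 2 * Rabs c0 + (1 + f0 0)) + (1 + f0 0) + 1).
  assert (HNBw : 0 <= NBw) by (unfold NBw; pose proof (Rabs_pos (f 0)); lra).
  assert (HKw : 0 < Kw) by (unfold Kw; pose proof (Rabs_pos c); pose proof (Rabs_pos c);
     assert (0 <= Rabs c * (1 + 2 * Rabs c + NBw)) by (apply Rmult_le_pos; lra); lra).
  assert (HKu : 0 < Ku) by (unfold Ku; pose proof (Rabs_pos c0);
     assert (0 <= Rabs c0 * (1 + 2 * Rabs c0 + (1 + f0 0))) by (apply Rmult_le_pos; lra); lra).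
  assert (HKwb : forall x, Rabs (W2 x) <= Kw).
  { intro x. rewrite HW2e. unfold Kw.
    replace (- c * W1 x - gc (w x) + h x) with (- (c * W1 x) + - (gc (w x) - h x)) by ring.
    pose proof (Rabs_triang (- (c * W1 x)) (- (gc (w x) - h x))).
    rewrite !Rabs_Ropp, Rabs_mult in H. pose proof (HBW1 x). pose proof (HNw x).
    pose proof (Rabs_pos c). assert (Rabs c * Rabs (W1 x) <= Rabs c * (1 + 2 * Rabs c + NBw))
      by (apply Rmult_le_compat_l; lra). lra. }
  assert (HKub : forall x, Rabs (U2 x) <= Ku).
  { intro x. rewrite HU2e. unfold Ku.
    replace (- c0 * U1 x - gc (u x)) with (- (c0 * U1 x) + - (gc (u x))) by ring.
    pose proof (Rabs_triang (- (c0 * U1 x)) (- (gc (u x)))).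
    rewrite !Rabs_Ropp, Rabs_mult in H. pose proof (HBU1 x). pose proof (HNu x).
    pose proof (Rabs_pos c0). assert (Rabs c0 * Rabs (U1 x) <= Rabs c0 * (1 + 2 * Rabs c0 + (1 + f0 0)))
      by (apply Rmult_le_compat_l; lra). lra. }
  set (kc := fun s => 1 - clamp s - f0 (clamp s)).
  assert (Hkcc : forall s, continuity_pt kc s).
  { intro s. unfold kc. apply continuity_pt_minus; [apply continuity_pt_minus|].
    - apply continuity_pt_const. intros ? ?; auto.
    - apply Hclc.
    - apply (cont_clamp_comp f0 Hf0c s). }
  assert (Hkce : forall s, 0 <= s <= 1 -> kc s = 1 - s - f0 s)
    by (intros s Hs; unfold kc; rewrite clamp_id; auto).
  assert (Hkneg : forall s, 0 <= s < r1 -> 1 - s - f0 s < 0).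
  { intros s Hs. destruct (Rlt_or_le (1 - s - f0 s) 0) as [|Hge]; auto. exfalso.
    assert (Hs0 : 0 < s) by (destruct (Req_dec s 0) as [->|]; lra).
    assert (Hne : 1 - s - f0 s <> 0) by (intro He; pose proof (Hr1u s ltac:(lra) ltac:(lra)); lra).
    destruct (ivt_up kc 0 s 0 Hs0 (fun x _ => Hkcc x)) as [t [Ht Hkt]].
    { rewrite Hkce by lra. lra. }
    { rewrite Hkce by lra. lra. }
    rewrite Hkce in Hkt by lra.
    assert (Ht0 : t <> 0) by (intro; subst t; lra).
    pose proof (Hr1u t ltac:(lra) ltac:(lra)). lra. }
  assert (Hgl : forall s, 0 <= s <= r1 -> gc s <= 0).
  { intros s Hs. rewrite Hgce by lra. destruct (Req_dec s r1) as [->|Hne].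
    - replace (1 - r1 - f0 r1) with 0 by lra. lra.
    - pose proof (Hkneg s ltac:(lra)). nra. }
  assert (HGl : forall s, 0 <= s <= r1 -> G s <= 0).
  { intros s Hs. rewrite <- HG0. apply (deriv_le0_decr G gc); [lra|intros; apply HG|].
    intros x Hx. apply Hgl; lra. }
  assert (HGc : forall s, continuity_pt G s) by (intro s; apply (cont_of_deriv _ _ _ (HG s))).
  set (Ew := fun x => W1 x * W1 x / 2 + G (w x)).
  assert (HEwd : forall x, derivable_pt_lim Ew x (- c * (W1 x * W1 x) + W1 x * h x)).
  { intro x. replace (- c * (W1 x * W1 x) + W1 x * h x) with (W1 x * W2 x + gc (w x) * W1 x)
      by (rewrite HW2e; ring).
    apply energy_deriv; auto. }
  assert (HW1n : forall x, W1 x <= 0) by (intro x; apply (deriv_le0_of_decr w x); auto).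
  assert (HEwm : forall a b, a <= b -> Ew b <= Ew a).
  { intros a b Hab. apply (deriv_le0_decr Ew (fun x => - c * (W1 x * W1 x) + W1 x * h x)); auto.
    intros x _. pose proof (HW1n x). pose proof (Hh x). nra. }
  assert (HEwb : forall x, G 0 <= Ew x <= G 1).
  { apply (mono_bounds Ew (G 1) (G 0) HEwm).
    - apply (E_lim_minus w W1 W2 G Kw); auto.
    - apply (E_lim_plus w W1 W2 G Kw); auto. }
  assert (HG1 : 0 <= G 1) by (pose proof (HEwb 0); lra).
  (* non-bistable case *)
  destruct (classic (exists s2, r1 < s2 < 1 /\ 1 - s2 - f0 s2 < 0)) as [[s2 [Hs2 Hk2]]|HA].
  { assert (Hkr : forall s, r1 < s < 1 -> 1 - s - f0 s <= 0).
    { intros s3 Hs3. destruct (Rle_or_lt (1 - s3 - f0 s3) 0) as [|Hk3]; auto. exfalso.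
      assert (Hroot : exists t, Rmin s2 s3 <= t <= Rmax s2 s3 /\ kc t = 0).
      { destruct (Rlt_or_le s2 s3) as [Hlt2|Hle2].
        - rewrite Rmin_left, Rmax_right by lra.
          apply (ivt_up kc s2 s3 0 Hlt2 (fun x _ => Hkcc x)); rewrite Hkce; lra.
        - assert (s3 < s2) by (destruct (Req_dec s3 s2); [subst; lra|lra]).
          rewrite Rmin_right, Rmax_left by lra.
          apply (ivt_down kc s3 s2 0 H (fun x _ => Hkcc x)); rewrite Hkce; lra. }
      destruct Hroot as [t [Ht Hkt]].
      assert (Rmin s2 s3 > r1) by (apply Rmin_glb_lt; lra).
      assert (Rmax s2 s3 < 1) by (apply Rmax_lub_lt; lra).
      rewrite Hkce in Hkt by lra. pose proof (Hr1u t ltac:(lra) ltac:(lra)). lra. }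
    assert (Hgall : forall s, r1 / 2 <= s <= 1 -> gc s <= 0).
    { intros s Hs. destruct (Rle_or_lt s r1). { apply Hgl; lra. }
      rewrite Hgce by lra. destruct (Req_dec s 1) as [->|].
      - rewrite Hf01. lra.
      - pose proof (Hkr s ltac:(lra)). nra. }
    assert (A1 : G (r1 / 2) < G (r1 / 4)).
    { apply (deriv_lt0_sdecr G gc); [lra|intros; apply HG|].
      intros x Hx. rewrite Hgce by lra. pose proof (Hkneg x ltac:(lra)). nra. }
    assert (A2 : G (r1 / 4) <= 0) by (apply HGl; lra).
    assert (A3 : G 1 <= G (r1 / 2)).
    { apply (deriv_le0_decr G gc); [lra|intros; apply HG|]. intros; apply Hgall; lra. }
    lra. }
  assert (Hgpos : forall s, r1 < s < 1 -> 0 < gc s).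
  { intros s Hs. rewrite Hgce by lra.
    assert (1 - s - f0 s <> 0) by (intro He; pose proof (Hr1u s ltac:(lra) ltac:(lra)); lra).
    assert (0 <= 1 - s - f0 s).
    { destruct (Rle_or_lt 0 (1 - s - f0 s)); auto. exfalso. apply HA. exists s. split; auto. }
    assert (0 < 1 - s - f0 s) by lra. nra. }
  assert (Hgr : forall s, r1 <= s <= 1 -> 0 <= gc s).
  { intros s Hs. destruct (Req_dec s r1) as [->|]. { rewrite Hgce by lra. replace (1 - r1 - f0 r1) with 0 by lra. lra. }
    destruct (Req_dec s 1) as [->|]. { rewrite Hgce by lra. rewrite Hf01. lra. }
    left. apply Hgpos. lra. }
  set (Eu := fun x => U1 x * U1 x / 2 + G (u x)).
  assert (HEud : forall x, derivable_pt_lim Eu x (- c0 * (U1 x * U1 x))).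
  { intro x. replace (- c0 * (U1 x * U1 x)) with (U1 x * U2 x + gc (u x) * U1 x)
      by (rewrite HU2e; ring).
    apply energy_deriv; auto. }
  destruct (Rle_or_lt c0 0) as [Hc0n|Hc0p].
  { assert (HEum : forall a b, a <= b -> (fun x => - Eu x) b <= (fun x => - Eu x) a).
    { intros a b Hab. simpl. assert (Eu a <= Eu b); [|lra].
      apply (deriv_ge0_incr Eu (fun x => - c0 * (U1 x * U1 x))); auto. intros; nra. }
    assert (HEub : forall x, - G 0 <= - Eu x <= - G 1).
    { apply (mono_bounds (fun x => - Eu x) (- G 1) (- G 0) HEum).
      - intros eps He. destruct (E_lim_minus u U1 U2 G Ku Hu1 Hu2 Hu HKu HKub (HGc 1) Hum eps He) as [M HM].
        exists M. intros x Hx. specialize (HM x Hx). fold (Eu x) in HM.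
        replace (- Eu x - - G 1) with (- (Eu x - G 1)) by ring. rewrite Rabs_Ropp. auto.
      - intros eps He. destruct (E_lim_plus u U1 U2 G Ku Hu1 Hu2 Hu HKu HKub (HGc 0) Hup eps He) as [M HM].
        exists M. intros x Hx. specialize (HM x Hx). fold (Eu x) in HM.
        replace (- Eu x - - G 0) with (- (Eu x - G 0)) by ring. rewrite Rabs_Ropp. auto. }
    assert (HG1z : G 1 = 0) by (pose proof (HEub 0); lra).
    assert (HWz : forall x, W1 x = 0).
    { intro x. assert (Ew x = 0) by (pose proof (HEwb x); lra).
      assert (- c * (W1 x * W1 x) + W1 x * h x = 0).
      { apply (deriv_zero_at_min Ew x _ 1 ltac:(lra)); auto.
        intros y _. pose proof (HEwb y). lra. }
      pose proof (HW1n x). pose proof (Hh x).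
      assert (W1 x * h x <= 0) by nra. assert (W1 x * W1 x = 0) by nra. nra. }
    assert (Hwc : forall y, y >= 0 -> w y = w 0).
    { intros y Hy. apply Rle_antisym.
      - apply (deriv_le0_decr w W1); [lra|intros; apply Hw1|intros z _; rewrite HWz; lra].
      - apply (deriv_ge0_incr w W1); [lra|intros; apply Hw1|intros z _; rewrite HWz; lra]. }
    pose proof (lim_const_zero w 0 Hwp Hwc) as Hw00.
    destruct (Hwm (1/2) ltac:(lra)) as [M HM].
    specialize (HM (Rmin M 0) (Rmin_l _ _)).
    assert (w (Rmin M 0) = w 0).
    { apply Rle_antisym.
      - apply (deriv_ge0_incr w W1 (Rmin M 0) 0); [apply Rmin_r|intros; apply Hw1|intros z _; rewrite HWz; lra].
      - apply (deriv_le0_decr w W1 (Rmin M 0) 0); [apply Rmin_r|intros; apply Hw1|intros z _; rewrite HWz; lra]. }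
    rewrite H, Hw00 in HM. apply Rabs_def2 in HM. lra. }
  (* bistable case with 0 < c0 < c *)
  destruct (u_mono u U1 U2 gc G c0 r1 Ku Hu1 Hu2 Hu Hum Hup HU2e Hc0p HG HG0 HGl Hgpos HKu HKub)
    as [HU1n HU1s].
  apply (core w W1 W2 u U1 U2 gc h c c0 r1 Kw Ku); auto.
Qed.
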